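(* Let $L$ be a regular pseudocomplemented de Morgan algebra with dual $pm$-space $P$. If there exist $x,y\in P$ with $\ell_\zeta(x,y)=n$ for some $1\le n<\omega$, then $L$ does not satisfy the identity $(x\wedge x^{\prime\ast})^{(n-1)(\prime\ast)}\approx(x\wedge x^{\prime\ast})^{n(\prime\ast)}$.
   Context: A $pm$-algebra is $(L;\wedge,\vee,{}^\ast,{}^\prime,0,1)$ with bounded distributive lattice reduct, pseudocomplement ${}^\ast$ and de Morgan involution ${}^\prime$; it is regular if any two congruences sharing a class are equal. Its dual $pm$-space $(P;\tau,\le,\zeta)$ is its Priestley space of prime ideals with the order-reversing involution $\zeta(I)=\{a:a'\notin I\}$. Notation: $x^{0(\prime\ast)}=x$, $x^{(k+1)(\prime\ast)}=((x^{k(\prime\ast)})')^\ast$. $\ell(x,y)$ is the distance between $x$ and $y$ in the comparability graph of $(P;\le)$ ($0$ if $x=y$, $\infty$ if not connected). The $\zeta$-distance is $\ell_\zeta(x,y)=\min\{\ell(x,y),\ell(x,\zeta(y))\}$. *)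

(* Defs.v *)
From HB Require Import structures.
From mathcomp Require Import all_boot all_order.
Set Implicit Arguments. Unset Strict Implicit. Unset Printing Implicit Defensive.
Import Order.TTheory.
Local Open Scope order_scope.

Section PM.
Context {disp : Order.disp_t} {L : tbDistrLatticeType disp}.

Definition is_pseudocomplement (star : L -> L) : Prop :=
  forall a x : L, (a `&` x = \bot) <-> (x <= star a).

Definition is_deMorgan_involution (neg : L -> L) : Prop :=
  (forall a : L, neg (neg a) = a) /\
  (forall a b : L, neg (a `&` b) = neg a `|` neg b).

Definition is_pm_algebra (star neg : L -> L) : Prop :=
  is_pseudocomplement star /\ is_deMorgan_involution neg.

(* pstar_iter k x = x^{k(prime star)}: iter 0 is x, iter (k+1) is star (neg (iter k)) *)
Definition pstar_iter (star neg : L -> L) (k : nat) (x : L) : L :=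
  iter k (fun y => star (neg y)) x.

(* Congruences of the pm-algebra (constants are automatically preserved). *)
Definition is_congruence (star neg : L -> L) (th : L -> L -> Prop) : Prop :=
  (forall a, th a a) /\ (forall a b, th a b -> th b a) /\
  (forall a b c, th a b -> th b c -> th a c) /\
  (forall a b c d, th a b -> th c d -> th (a `&` c) (b `&` d)) /\
  (forall a b c d, th a b -> th c d -> th (a `|` c) (b `|` d)) /\
  (forall a b, th a b -> th (star a) (star b)) /\
  (forall a b, th a b -> th (neg a) (neg b)).

Definition is_regular (star neg : L -> L) : Prop :=
  forall th ph : L -> L -> Prop,
    is_congruence star neg th -> is_congruence star neg ph ->
    (exists a : L, forall b : L, th a b <-> ph a b) ->
    forall x y : L, th x y <-> ph x y.

(* Prime ideals of L: the points of the dual Priestley space. *)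
Definition prime_ideal (I : L -> Prop) : Prop :=
  I \bot /\ ~ I \top /\
  (forall a b : L, I b -> a <= b -> I a) /\
  (forall a b : L, I a -> I b -> I (a `|` b)) /\
  (forall a b : L, I (a `&` b) -> I a \/ I b).

(* Order of the Priestley space: inclusion of prime ideals. *)
Definition ideal_le (I J : L -> Prop) : Prop := forall a, I a -> J a.

Definition comparable_ideals (I J : L -> Prop) : Prop :=
  ideal_le I J \/ ideal_le J I.

Definition zeta (neg : L -> L) (I : L -> Prop) : L -> Prop :=
  fun a => ~ I (neg a).

(* dist_le k I J : I and J are joined in the comparability graph of
   (P; <=) by a walk of at most k edges, i.e. ell(I,J) <= k.
   (Comparability is reflexive here, so "exactly k steps" with possible
   stuttering is the same as "at most k edges".) *)
Fixpoint dist_le (k : nat) (I J : L -> Prop) : Prop :=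
  match k with
  | 0 => ideal_le I J /\ ideal_le J I
  | S k' => exists K : L -> Prop,
      prime_ideal K /\ dist_le k' I K /\ comparable_ideals K J
  end.

Definition dist_eq (n : nat) (I J : L -> Prop) : Prop :=
  dist_le n I J /\ (forall m, (m < n)%N -> ~ dist_le m I J).

Definition zeta_dist_eq (neg : L -> L) (n : nat) (I J : L -> Prop) : Prop :=
  (dist_le n I J \/ dist_le n I (zeta neg J)) /\
  (forall m, (m < n)%N -> ~ dist_le m I J /\ ~ dist_le m I (zeta neg J)).

End PM.

(* Main.v *)
Require Import Defs.
From HB Require Import structures.
From mathcomp Require Import all_boot all_order.
From mathcomp Require Import boolp classical_sets.
From Stdlib Require Import Classical.
Import Order.TTheory.
Set Implicit Arguments. Unset Strict Implicit.
Local Open Scope order_scope.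

Section Alg.
Context {disp : Order.disp_t} {L : tbDistrLatticeType disp}.
Context (star neg : L -> L).
Context (hstar : is_pseudocomplement star) (hneg : is_deMorgan_involution neg).

Lemma negK a : neg (neg a) = a. Proof. exact: hneg.1. Qed.
Lemma negI a b : neg (a `&` b) = neg a `|` neg b. Proof. exact: hneg.2. Qed.
Lemma negU a b : neg (a `|` b) = neg a `&` neg b.
Proof. by rewrite -[in LHS](negK a) -[in LHS](negK b) -negI negK. Qed.
Lemma neg_anti a b : a <= b -> neg b <= neg a.
Proof. by move=> /meet_idPl E; rewrite -E negI leUr. Qed.
Lemma neg_le a b : (neg a <= neg b) = (b <= a).
Proof.
apply/idP/idP; last exact: neg_anti.
by move=> /neg_anti; rewrite !negK.
Qed.
Lemma neg1 : neg \top = \bot.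
Proof.
apply/le_anti; rewrite le0x andbT.
by have := neg_anti (lex1 (neg \bot)); rewrite negK.
Qed.
Lemma neg0 : neg \bot = \top.
Proof. by rewrite -neg1 negK. Qed.

Lemma meet_star a : a `&` star a = \bot. Proof. by apply/(hstar a (star a)). Qed.
Lemma le_star a x : a `&` x = \bot -> x <= star a. Proof. by move/(hstar a x). Qed.
Lemma star_le a x : x <= star a -> a `&` x = \bot. Proof. by move/(hstar a x). Qed.
Lemma star_anti a b : a <= b -> star b <= star a.
Proof.
move=> ab; apply: le_star; apply/le_anti; rewrite le0x andbT.
by rewrite -(meet_star b); apply: leI2.
Qed.

Definition F (x : L) := star (neg x).
Lemma F_mono a b : a <= b -> F a <= F b.
Proof. by move=> ab; apply: star_anti; apply: neg_anti. Qed.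

Lemma plus_top a : a `|` neg (star (neg a)) = \top.
Proof.
have h := meet_star (neg a).
by rewrite -{1}(negK a) -negI h neg0.
Qed.

Lemma pp_le a : star (neg (star (neg a))) <= a.
Proof.
set c := neg (star (neg a)).
have e : star c = star c `&` (a `|` c) by rewrite plus_top meetx1.
rewrite e meetUr (meetC (star c) c) meet_star joinx0; exact: leIr.
Qed.

Definition t (k : nat) (a : L) := pstar_iter star neg k (a `&` star (neg a)).
Lemma tS k a : t k.+1 a = F (t k a).
Proof. by []. Qed.
Lemma t_anti k a : t k.+1 a <= t k a.
Proof.
elim: k => [|k IH]; last by rewrite tS [t k.+1 a]tS; apply: F_mono.
rewrite /t /pstar_iter /=; rewrite lexI; apply/andP; split.
- apply: le_trans (pp_le a); exact: (F_mono (leIr _ _)).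
- exact: (F_mono (leIl _ _)).
Qed.

End Alg.

Section PIT.
Context {disp : Order.disp_t} {L : tbDistrLatticeType disp}.

Lemma PIT (Z Fl : L -> Prop) :
  Z \bot -> (forall a b, Z b -> a <= b -> Z a) -> (forall a b, Z a -> Z b -> Z (a `|` b)) ->
  Fl \top -> (forall a b, Fl a -> a <= b -> Fl b) -> (forall a b, Fl a -> Fl b -> Fl (a `&` b)) ->
  (forall a, Z a -> Fl a -> False) ->
  exists q : L -> Prop, prime_ideal q /\ (forall a, Z a -> q a) /\ (forall a, Fl a -> ~ q a).
Proof.
move=> Z0 Zd Zj F1 Fu Fm ZF.
pose IZ (X : L -> Prop) := [/\ (forall a, Z a -> X a), (forall a b, X b -> a <= b -> X a),
   (forall a b, X a -> X b -> X (a `|` b)) & (forall a, X a -> Fl a -> False)].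
pose T := {X : L -> Prop | IZ X}.
have IZZ : IZ Z by split.
pose R (s t : T) : bool := `[< forall a, sval s a -> sval t a >].
have [t tmax] : exists t, premaximal R t.
  apply: (@ZL_preorder T (exist _ Z IZZ) R).
  - by move=> s; apply/asboolP.
  - by move=> r s u /asboolP rs /asboolP su; apply/asboolP => a /rs /su.
  move=> A Atot.
  pose U (a : L) := Z a \/ exists s : T, A s /\ sval s a.
  have IZU : IZ U.
    split.
    - by move=> a; left.
    - move=> a b [Zb|[s [As sb]]] ab; first by left; apply: Zd ab.
      by right; exists s; split => //; case: (svalP s) => _ sd _ _; apply: sd ab.
    - move=> a b [Za|[s [As sa]]] [Zb|[u [Au ub]]].
      + by left; apply: Zj.
      + right; exists u; split => //; case: (svalP u) => uZ _ uj _; apply: uj => //; exact: uZ.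
      + right; exists s; split => //; case: (svalP s) => sZ _ sj _; apply: sj => //; exact: sZ.
      + case: (Atot s u As Au) => /asboolP h.
        * right; exists u; split => //; case: (svalP u) => _ _ uj _; apply: uj => //; exact: h.
        * right; exists s; split => //; case: (svalP s) => _ _ sj _; apply: sj => //; exact: h.
    - move=> a [Za|[s [As sa]]] Fa; first exact: ZF Za Fa.
      by case: (svalP s) => _ _ _ sF; apply: sF sa Fa.
  exists (exist _ U IZU) => s As; apply/asboolP => a sa /=; by right; exists s; split.
set M := sval t.
have [MZ Md Mj MF] : IZ M := svalP t.
have maxM : forall X : L -> Prop, IZ X -> (forall a, M a -> X a) -> forall a, X a -> M a.
  move=> X IX MX; have /asboolP h : R (exist _ X IX) t by apply: tmax; apply/asboolP.
  exact: h.
exists M; split; last split.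
- split; first exact: MZ.
  split; first by move=> M1; exact: MF M1 F1.
  split; first exact: Md.
  split; first exact: Mj.
  move=> a b Mab; apply: NNPP => nab.
  have na : ~ M a by move=> h; apply: nab; left.
  have nb : ~ M b by move=> h; apply: nab; right.
  have ext : forall c, ~ M c -> exists d m, Fl d /\ M m /\ d <= m `|` c.
    move=> c nc; apply: NNPP => hne.
    pose X (x : L) := exists m, M m /\ x <= m `|` c.
    have IX : IZ X.
      split.
      - by move=> x Zx; exists x; split; [exact: MZ | exact: leUl].
      - by move=> x y [m [Mm ym]] xy; exists m; split => //; apply: le_trans ym.
      - move=> x y [m [Mm xm]] [m' [Mm' ym']]; exists (m `|` m'); split; first exact: Mj.
        rewrite leUx; apply/andP; split.
        + apply: le_trans xm _; apply: leU2 => //; exact: leUl.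
        + apply: le_trans ym' _; apply: leU2 => //; exact: leUr.
      - by move=> x [m [Mm xm]] Fx; apply: hne; exists x, m.
    apply: nc; apply: (maxM X IX).
    + by move=> x Mx; exists x; split => //; exact: leUl.
    + by exists \bot; split; [exact: MZ | exact: leUr].
  have [d1 [m1 [F1' [M1 h1]]]] := ext a na.
  have [d2 [m2 [F2' [M2 h2]]]] := ext b nb.
  apply: (MF (d1 `&` d2)); last exact: Fm.
  apply: (Md _ ((m1 `|` m2) `|` (a `&` b))); first exact: Mj (Mj _ _ M1 M2) Mab.
  rewrite joinIr; apply: leI2.
  + apply: le_trans h1 _; apply: leU2 => //; exact: leUl.
  + apply: le_trans h2 _; apply: leU2 => //; exact: leUr.
- exact: MZ.
- by move=> a Fa Ma; exact: MF Ma Fa.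
Qed.

End PIT.

Section Prime.
Context {disp : Order.disp_t} {L : tbDistrLatticeType disp}.
Context (star neg : L -> L).
Context (hstar : is_pseudocomplement star) (hneg : is_deMorgan_involution neg).

Lemma pi_bot (I : L -> Prop) : prime_ideal I -> I \bot. Proof. by case. Qed.
Lemma pi_top (I : L -> Prop) : prime_ideal I -> ~ I \top. Proof. by case=> _ []. Qed.
Lemma pi_le (I : L -> Prop) a b : prime_ideal I -> I b -> a <= b -> I a.
Proof. by case=> _ [_ [h _]]; apply: h. Qed.
Lemma pi_join (I : L -> Prop) a b : prime_ideal I -> I a -> I b -> I (a `|` b).
Proof. by case=> _ [_ [_ [h _]]]; apply: h. Qed.
Lemma pi_prime (I : L -> Prop) a b : prime_ideal I -> I (a `&` b) -> I a \/ I b.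
Proof. by case=> _ [_ [_ [_ h]]]; apply: h. Qed.
Lemma pi_meet_notin (I : L -> Prop) a b : prime_ideal I -> ~ I a -> ~ I b -> ~ I (a `&` b).
Proof. by move=> pI na nb /(pi_prime pI) []. Qed.

Lemma zeta_prime (I : L -> Prop) : prime_ideal I -> prime_ideal (zeta neg I).
Proof.
move=> pI; rewrite /zeta; split; last split; last split; last split.
- by rewrite (neg0 hneg); apply: pi_top.
- by rewrite (neg1 hneg) => h; apply: h; apply: pi_bot.
- move=> a b nb ab na; apply: nb; apply: pi_le pI na _; exact: neg_anti.
- move=> a b na nb; rewrite (negU hneg) => h; case: (pi_prime pI h) => //.
- move=> a b; rewrite (negI hneg) => h; apply: NNPP => hh; apply: h.
  apply: pi_join => //; apply: NNPP => h'; apply: hh; [left|right] => //.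
Qed.

Lemma zetaK (I : L -> Prop) a : zeta neg (zeta neg I) a <-> I a.
Proof.
rewrite /zeta (negK hneg); split; last by move=> h; apply.
exact: NNPP.
Qed.

Lemma zeta_anti (I J : L -> Prop) : ideal_le I J -> ideal_le (zeta neg J) (zeta neg I).
Proof. by move=> IJ a nJ nI; apply: nJ; apply: IJ. Qed.

Lemma star_in (r s : L -> Prop) b : prime_ideal r -> ~ r b -> ideal_le r s -> s (star b).
Proof.
move=> pr nb rs; apply: rs.
have : r (b `&` star b) by rewrite (meet_star hstar); apply: pi_bot.
by case/(pi_prime pr).
Qed.

Lemma star_notin (s : L -> Prop) b : prime_ideal s ->
  (forall r, prime_ideal r -> ideal_le r s -> r b) -> ~ s (star b).
Proof.
move=> ps H sb.
pose Fl (c : L) := exists d, ~ s d /\ d `&` b <= c.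
have Z3 : forall a b' : L, a <= \bot -> b' <= \bot -> a `|` b' <= \bot.
  by move=> a b' ha hb; rewrite leUx ha hb.
have F1 : Fl \top by exists \top; split; [apply: pi_top | exact: lex1].
have Fu : forall c c', Fl c -> c <= c' -> Fl c'.
  by move=> c c' [d [nd h]] cc'; exists d; split => //; apply: le_trans cc'.
have Fm : forall c c', Fl c -> Fl c' -> Fl (c `&` c').
  move=> c c' [d [nd h]] [d' [nd' h']]; exists (d `&` d'); split.
  + exact: pi_meet_notin.
  + rewrite lexI; apply/andP; split.
    * apply: le_trans h; apply: leI2 => //; exact: leIl.
    * apply: le_trans h'; apply: leI2 => //; exact: leIr.
have ZF : forall c, c <= \bot -> Fl c -> False.
  move=> c c0 [d [nd h]]; apply: nd; apply: pi_le ps sb _.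
  apply: le_star => //; apply/le_anti; rewrite le0x andbT meetC.
  exact: le_trans h c0.
have [q [pq [_ qF]]] := @PIT _ L (fun c => c <= \bot) Fl (lexx _)
  (fun a b' hb ab => le_trans ab hb) Z3 F1 Fu Fm ZF.
have qs : ideal_le q s.
  move=> c qc; apply: NNPP => nc; apply: (qF c) => //.
  by exists c; split => //; exact: leIl.
apply: (qF b); last exact: H.
by exists \top; split; [apply: pi_top | rewrite meetC meetx1].
Qed.

End Prime.

Section Reg.
Context {disp : Order.disp_t} {L : tbDistrLatticeType disp}.
Context (star neg : L -> L).
Context (hstar : is_pseudocomplement star) (hneg : is_deMorgan_involution neg).

Definition plus (a : L) := neg (star (neg a)).

Lemma neg_inj a b : neg a = neg b -> a = b.
Proof. by move=> h; rewrite -(negK hneg a) h negK. Qed.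

Lemma star_bot : star \bot = \top.
Proof. apply/le_anti; rewrite lex1 /=; apply: (le_star hstar); exact: meet0x. Qed.

Lemma join_eq_bot (a b : L) : a `|` b = \bot <-> a = \bot /\ b = \bot.
Proof.
split; last by case=> -> ->; rewrite joinx0.
move=> h; split; apply/le_anti; rewrite le0x andbT -h; [exact: leUl | exact: leUr].
Qed.

Lemma star_meet_eq a b c : star a = star b -> star (a `&` c) = star (b `&` c).
Proof.
have key : forall a b, star a = star b -> star (a `&` c) <= star (b `&` c).
  move=> a' b' e; apply: (le_star hstar).
  have : c `&` star (a' `&` c) <= star a'.
    by apply: (le_star hstar); rewrite meetA; exact: (meet_star hstar).
  by rewrite e => /(star_le hstar); rewrite meetA.
by move=> e; apply/le_anti; rewrite !key.
Qed.

Lemma star_join a c : star (a `|` c) = star a `&` star c.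
Proof.
apply/le_anti; apply/andP; split.
- rewrite lexI; apply/andP; split; apply: (star_anti hstar); [exact: leUl | exact: leUr].
- apply: (le_star hstar); rewrite meetUl; apply/join_eq_bot; split.
  + by rewrite meetA (meet_star hstar) meet0x.
  + by rewrite (meetC (star a)) meetA (meet_star hstar) meet0x.
Qed.

Lemma star_join_eq a b c : star a = star b -> star (a `|` c) = star (b `|` c).
Proof. by move=> e; rewrite !star_join e. Qed.

Definition Phi (a b : L) := star a = star b /\ plus a = plus b.

Lemma plus_eq a b : plus a = plus b -> star (neg a) = star (neg b).
Proof. exact: neg_inj. Qed.

Lemma Phi_cong : is_congruence star neg Phi.
Proof.
rewrite /Phi /plus; split; [|split; [|split; [|split; [|split; [|split]]]]].
- by [].
- by move=> a b [h1 h2]; split.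
- by move=> a b c [h1 h2] [h3 h4]; split; [rewrite h1 | rewrite h2].
- move=> a b c d [s1 p1] [s2 p2]; split.
  + by rewrite (star_meet_eq c s1) meetC (star_meet_eq b s2) meetC.
  + congr neg; rewrite !(negI hneg).
    move/neg_inj: p1 => p1; move/neg_inj: p2 => p2.
    by rewrite (star_join_eq (neg c) p1) joinC (star_join_eq (neg b) p2) joinC.
- move=> a b c d [s1 p1] [s2 p2]; split.
  + by rewrite (star_join_eq c s1) joinC (star_join_eq b s2) joinC.
  + congr neg; rewrite !(negU hneg).
    move/neg_inj: p1 => p1; move/neg_inj: p2 => p2.
    by rewrite (star_meet_eq (neg c) p1) meetC (star_meet_eq (neg b) p2) meetC.
- by move=> a b [h1 h2]; rewrite h1.
- move=> a b [s1 p1]; split; first exact: neg_inj.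
  by rewrite !(negK hneg) s1.
Qed.

Lemma eq_cong : is_congruence star neg (fun a b : L => a = b).
Proof.
split; [|split; [|split; [|split; [|split; [|split]]]]] => //.
- by move=> a b c -> ->.
- by move=> a b c d -> ->.
- by move=> a b c d -> ->.
- by move=> a b ->.
- by move=> a b ->.
Qed.

Lemma plus_anti a b : a <= b -> plus b <= plus a.
Proof. by move=> ab; apply: (neg_anti hneg); apply: (star_anti hstar); apply: (neg_anti hneg). Qed.

Lemma plus_char a e : a `|` e = \top -> plus a <= e.
Proof.
move=> h; rewrite /plus -(neg_le hneg) (negK hneg); apply: (le_star hstar).
by rewrite -(negU hneg) h (neg1 hneg).
Qed.

Lemma join_plus a : a `|` plus a = \top.
Proof. exact: (plus_top hstar hneg). Qed.

Lemma reg_identity : is_regular star neg -> forall x y : L, x `&` plus x <= y `|` star y.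
Proof.
move=> hreg x y.
have ex : exists a : L, forall b', a = b' <-> Phi a b'.
  exists \bot => b'; split; first by move=> <-.
  case=> h _; rewrite star_bot in h.
  have hb : b' `&` \top = \bot by apply: (star_le hstar); rewrite -h.
  by rewrite meetx1 in hb.
have E : forall a b, Phi a b -> a = b.
  by move=> a b; exact: (proj2 (hreg _ _ eq_cong Phi_cong ex a b)).
set c := x `&` plus x; set b := y `|` star y.
have sb : star b = \bot by rewrite /b star_join (meet_star hstar).
have pc : plus c = \top.
  rewrite /c /plus (negI hneg) star_join.
  by rewrite (negK hneg) (meet_star hstar) (neg0 hneg).
have : Phi (c `|` b) b.
  split; first by rewrite star_join sb meetx0.
  apply/le_anti; apply/andP; split; first by apply: plus_anti; exact: leUr.
  apply: plus_char; apply/le_anti; rewrite lex1 /=.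
  have : plus c <= b `|` plus (c `|` b).
    by apply: plus_char; rewrite joinA; exact: join_plus.
  by rewrite pc.
move/E => <-; exact: leUl.
Qed.

Definition no3chain := forall r p q : L -> Prop, prime_ideal r -> prime_ideal p -> prime_ideal q ->
  ideal_le r p -> ideal_le p q -> ~ ideal_le p r -> ~ ideal_le q p -> False.

Lemma reg_no3chain : is_regular star neg -> no3chain.
Proof.
move=> /reg_identity hid r p q pr pp pq rp pq' npr nqp.
have [y [py ny]] : exists y, p y /\ ~ r y.
  apply: NNPP => h; apply: npr => a pa; apply: NNPP => ra; apply: h; by exists a.
have [x [qx nx]] : exists x, q x /\ ~ p x.
  apply: NNPP => h; apply: nqp => a qa; apply: NNPP => pa; apply: h; by exists a.
have psy : p (star y) by apply: (star_in hstar pr ny rp).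
have npx : ~ p (plus x).
  move=> ppx; apply: (pi_top pq); rewrite -(join_plus x); apply: (pi_join pq qx).
  exact: pq'.
apply: (pi_meet_notin pp nx npx); apply: (pi_le pp _ (hid x y)).
exact: (pi_join pp py psy).
Qed.

Definition minimal (p : L -> Prop) := forall r, prime_ideal r -> ideal_le r p -> ideal_le p r.

Lemma min_or_zeta (I : L -> Prop) : no3chain -> prime_ideal I ->
  minimal I \/ minimal (zeta neg I).
Proof.
move=> n3 pI; apply: NNPP => h.
have nI : ~ minimal I by move=> m; apply: h; left.
have nZ : ~ minimal (zeta neg I) by move=> m; apply: h; right.
apply: nZ => s ps sZ; apply: NNPP => nZs.
apply: nI => r pr rI; apply: NNPP => nIr.
apply: (n3 r I (zeta neg s) pr pI (zeta_prime hneg ps) rI) => //.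
- move=> a Ia; apply: (zeta_anti sZ); exact: (proj2 (zetaK hneg I a) Ia).
- move=> h'; apply: nZs => a za; exact: (proj1 (zetaK hneg s a) (zeta_anti h' za)).
Qed.

End Reg.

Section Comp.
Context {disp : Order.disp_t} {L : tbDistrLatticeType disp}.
Context (star neg : L -> L).
Context (hstar : is_pseudocomplement star) (hneg : is_deMorgan_involution neg).

Definition isIdeal (Z : L -> Prop) := Z \bot /\ (forall a b, Z b -> a <= b -> Z a) /\
  (forall a b, Z a -> Z b -> Z (a `|` b)).
Definition isFilter (Z : L -> Prop) := Z \top /\ (forall a b, Z a -> a <= b -> Z b) /\
  (forall a b, Z a -> Z b -> Z (a `&` b)).

Definition compC (N : (L -> Prop) -> Prop) := forall Z, isIdeal Z ->
  (forall a, Z a -> exists q, N q /\ q a) -> exists q, N q /\ forall a, Z a -> q a.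
Definition compF (N : (L -> Prop) -> Prop) := forall Z, isFilter Z ->
  (forall a, Z a -> exists q, N q /\ ~ q a) -> exists q, N q /\ forall a, Z a -> ~ q a.

Definition allprime (N : (L -> Prop) -> Prop) := forall q, N q -> prime_ideal q.

Lemma compC_ext N N' : compC N -> (forall q, N q <-> N' q) -> compC N'.
Proof.
move=> c e Z iZ H; have [|q [Nq Zq]] := c Z iZ.
  by move=> a /H [q [Nq qa]]; exists q; split => //; apply/e.
by exists q; split => //; apply/e.
Qed.

Lemma compF_ext N N' : compF N -> (forall q, N q <-> N' q) -> compF N'.
Proof.
move=> c e Z iZ H; have [|q [Nq Zq]] := c Z iZ.
  by move=> a /H [q [Nq qa]]; exists q; split => //; apply/e.
by exists q; split => //; apply/e.
Qed.

Lemma compC_union N1 N2 : allprime N1 -> allprime N2 -> compC N1 -> compC N2 ->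
  compC (fun q => N1 q \/ N2 q).
Proof.
move=> p1 p2 c1 c2 Z [Z0 [Zd Zj]] H.
case: (classic (exists q, N1 q /\ forall a, Z a -> q a)) => [[q [Nq Zq]]|h1].
  by exists q; split => //; left.
case: (classic (exists q, N2 q /\ forall a, Z a -> q a)) => [[q [Nq Zq]]|h2].
  by exists q; split => //; right.
have [a1 [Za1 n1]] : exists a, Z a /\ forall q, N1 q -> ~ q a.
  apply: NNPP => h; apply: h1; apply: c1; first by split.
  move=> a Za; apply: NNPP => h'; apply: h; exists a; split => // q Nq qa; apply: h'; by exists q.
have [a2 [Za2 n2]] : exists a, Z a /\ forall q, N2 q -> ~ q a.
  apply: NNPP => h; apply: h2; apply: c2; first by split.
  move=> a Za; apply: NNPP => h'; apply: h; exists a; split => // q Nq qa; apply: h'; by exists q.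
exfalso; have [q [[Nq|Nq] qa]] := H _ (Zj _ _ Za1 Za2).
- by apply: (n1 q Nq); apply: (pi_le (p1 q Nq) qa); exact: leUl.
- by apply: (n2 q Nq); apply: (pi_le (p2 q Nq) qa); exact: leUr.
Qed.

Lemma compF_union N1 N2 : allprime N1 -> allprime N2 -> compF N1 -> compF N2 ->
  compF (fun q => N1 q \/ N2 q).
Proof.
move=> p1 p2 c1 c2 Z [Z0 [Zd Zj]] H.
case: (classic (exists q, N1 q /\ forall a, Z a -> ~ q a)) => [[q [Nq Zq]]|h1].
  by exists q; split => //; left.
case: (classic (exists q, N2 q /\ forall a, Z a -> ~ q a)) => [[q [Nq Zq]]|h2].
  by exists q; split => //; right.
have [a1 [Za1 n1]] : exists a, Z a /\ forall q, N1 q -> q a.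
  apply: NNPP => h; apply: h1; apply: c1; first by split.
  move=> a Za; apply: NNPP => h'; apply: h; exists a; split => // q Nq.
  apply: NNPP => qa; apply: h'; by exists q.
have [a2 [Za2 n2]] : exists a, Z a /\ forall q, N2 q -> q a.
  apply: NNPP => h; apply: h2; apply: c2; first by split.
  move=> a Za; apply: NNPP => h'; apply: h; exists a; split => // q Nq.
  apply: NNPP => qa; apply: h'; by exists q.
exfalso; have [q [[Nq|Nq] qa]] := H _ (Zj _ _ Za1 Za2).
- by apply: qa; apply: (pi_le (p1 q Nq) (n1 q Nq)); exact: leIl.
- by apply: qa; apply: (pi_le (p2 q Nq) (n2 q Nq)); exact: leIr.
Qed.

Section Step.
Variable N : (L -> Prop) -> Prop.
Hypothesis pN : allprime N.

Definition Nup q := prime_ideal q /\ exists K, N K /\ ideal_le K q.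
Definition Ndown q := prime_ideal q /\ exists K, N K /\ ideal_le q K.

Lemma compC_down : compC N -> compC Ndown.
Proof.
move=> c Z iZ H; have [|K [NK ZK]] := c Z iZ.
  by move=> a /H [q [[pq [K [NK qK]]] qa]]; exists K; split => //; apply: qK.
by exists K; split => //; split; [exact: (pN NK) | by exists K; split].

Qed.

Lemma compF_up : compF N -> compF Nup.
Proof.
move=> c Z iZ H; have [|K [NK ZK]] := c Z iZ.
  by move=> a /H [q [[pq [K [NK Kq]]] qa]]; exists K; split => // Ka; apply: qa; apply: Kq.
by exists K; split => //; split; [exact: (pN NK) | by exists K; split].

Qed.

Lemma compC_up : compF N -> compC Nup.
Proof.
move=> c Z [Z0 [Zd Zj]] H.
pose Fl f := exists a, Z a /\ plus star neg a <= f.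
have iF : isFilter Fl.
  split; first by exists \bot; split => //; exact: lex1.
  split; first by move=> x y [a [Za h]] xy; exists a; split => //; apply: le_trans xy.
  move=> x y [a [Za h]] [b [Zb h']]; exists (a `|` b); split; first exact: Zj.
  rewrite lexI; apply/andP; split.
  - by apply: le_trans h; apply: (plus_anti hstar hneg); exact: leUl.
  - by apply: le_trans h'; apply: (plus_anti hstar hneg); exact: leUr.
have [|K [NK FK]] := c Fl iF.
  move=> f [a [Za h]]; have [q [[pq [K [NK Kq]]] qa]] := H a Za.
  exists K; split => // Kf; apply: (pi_top pq).
  rewrite -(join_plus hstar hneg a); apply: (pi_join pq qa); apply: Kq.
  exact: (pi_le (pN NK) Kf h).
pose Z' c := exists k a, K k /\ Z a /\ c <= k `|` a.
have Z'0 : Z' \bot by exists \bot, \bot; split; [exact: pi_bot (pN NK) | split => //; exact: le0x].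
have Z'd : forall x y, Z' y -> x <= y -> Z' x.
  by move=> x y [k [a [Kk [Za h]]]] xy; exists k, a; split => //; split => //; apply: le_trans h.
have Z'j : forall x y, Z' x -> Z' y -> Z' (x `|` y).
  move=> x y [k [a [Kk [Za h]]]] [k' [a' [Kk' [Za' h']]]].
  exists (k `|` k'), (a `|` a'); split; first exact: pi_join (pN NK) Kk Kk'.
  split; first exact: Zj.
  rewrite leUx; apply/andP; split.
  - apply: le_trans h _; apply: leU2; exact: leUl.
  - apply: le_trans h' _; apply: leU2; exact: leUr.
have ZF : forall x, Z' x -> \top <= x -> False.
  move=> x [k [a [Kk [Za h]]]] tx.
  have e : k `|` a = \top by apply/le_anti; rewrite lex1 /=; exact: le_trans tx h.
  apply: (FK k) => //; exists a; split => //; apply: (plus_char hstar hneg).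
  by rewrite joinC.
have Tm : forall x y : L, \top <= x -> \top <= y -> \top <= x `&` y.
  by move=> x y h h'; rewrite lexI h h'.
have [q [pq [Z'q Fq]]] := @PIT _ L Z' (fun c => \top <= c) Z'0 Z'd Z'j (lexx _)
  (fun x y h xy => le_trans h xy) Tm ZF.
exists q; split.
- split => //; exists K; split => // x Kx; apply: Z'q; exists x, \bot.
  by split => //; split; [exact: Z0 | exact: leUl].
- by move=> a Za; apply: Z'q; exists \bot, a; split; [exact: pi_bot (pN NK) | split => //; exact: leUr].
Qed.

Lemma compF_down : compC N -> compF Ndown.
Proof.
move=> c Fl [F1 [Fu Fm]] H.
pose Z c := exists f, Fl f /\ c <= star f.
have iZ : isIdeal Z.
  split; first by exists \top; split => //; exact: le0x.
  split; first by move=> x y [f [Ff h]] xy; exists f; split => //; apply: le_trans xy h.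
  move=> x y [f [Ff h]] [g [Fg h']]; exists (f `&` g); split; first exact: Fm.
  rewrite leUx; apply/andP; split.
  - by apply: le_trans h _; apply: (star_anti hstar); exact: leIl.
  - by apply: le_trans h' _; apply: (star_anti hstar); exact: leIr.
have [|K [NK ZK]] := c Z iZ.
  move=> x [f [Ff h]]; have [q [[pq [K [NK qK]]] qf]] := H f Ff.
  exists K; split => //; apply: (pi_le (pN NK) _ h).
  exact: (star_in hstar pq qf qK).
pose Fl' c := exists f d, Fl f /\ ~ K d /\ f `&` d <= c.
have F'1 : Fl' \top by exists \top, \top; split => //; split; [exact: pi_top (pN NK) | exact: lex1].
have F'u : forall x y, Fl' x -> x <= y -> Fl' y.
  by move=> x y [f [d [Ff [nd h]]]] xy; exists f, d; split => //; split => //; apply: le_trans xy.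
have F'm : forall x y, Fl' x -> Fl' y -> Fl' (x `&` y).
  move=> x y [f [d [Ff [nd h]]]] [f' [d' [Ff' [nd' h']]]].
  exists (f `&` f'), (d `&` d'); split; first exact: Fm.
  split; first exact: pi_meet_notin (pN NK) nd nd'.
  rewrite lexI; apply/andP; split.
  - apply: le_trans h; apply: leI2; exact: leIl.
  - apply: le_trans h'; apply: leI2; exact: leIr.
have Z3 : forall a b' : L, a <= \bot -> b' <= \bot -> a `|` b' <= \bot.
  by move=> a b' ha hb; rewrite leUx ha hb.
have ZF : forall x, x <= \bot -> Fl' x -> False.
  move=> x x0 [f [d [Ff [nd h]]]]; apply: nd.
  apply: (pi_le (pN NK) (ZK (star f) _)); first by exists f; split.
  apply: (le_star hstar); apply/le_anti; rewrite le0x andbT.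
  exact: le_trans h x0.
have [q [pq [_ qF]]] := @PIT _ L (fun c => c <= \bot) Fl' (lexx _)
  (fun a b' hb ab => le_trans ab hb) Z3 F'1 F'u F'm ZF.
exists q; split.
- split => //; exists K; split => // x qx; apply: NNPP => nx; apply: (qF x) => //.
  by exists \top, x; split => //; split => //; rewrite meetC meetx1.
- move=> f Ff qf; apply: (qF f) => //.
  by exists f, \top; split => //; split; [exact: pi_top (pN NK) | rewrite meetx1].
Qed.

End Step.
End Comp.

Section Dist.
Context {disp : Order.disp_t} {L : tbDistrLatticeType disp}.
Context (star neg : L -> L).
Context (hstar : is_pseudocomplement star) (hneg : is_deMorgan_involution neg).

Definition eqI (I J : L -> Prop) := forall a, I a <-> J a.

Lemma dist_end k (I J J' : L -> Prop) : dist_le k I J -> eqI J J' -> dist_le k I J'.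
Proof.
case: k => [|k] /=.
  by move=> [h1 h2] e; split => a; [move/h1/e | move/e/h2].
move=> [K [pK [d c]]] e; exists K; split => //; split => //.
by case: c => h; [left => a /h/e | right => a /e/h].
Qed.

Lemma dist_start k (I I' J : L -> Prop) : dist_le k I J -> eqI I I' -> dist_le k I' J.
Proof.
elim: k J => [|k IH] J /=.
  by move=> [h1 h2] e; split => a; [move/e/h1 | move/h2/e].
by move=> [K [pK [d c]]] e; exists K; split => //; split => //; apply: IH.
Qed.

Lemma eqI_zz (I : L -> Prop) : eqI (zeta neg (zeta neg I)) I.
Proof. by move=> a; apply: (zetaK hneg). Qed.

Lemma eqI_sym (I J : L -> Prop) : eqI I J -> eqI J I.
Proof. by move=> e a; split => /e. Qed.

Lemma dist_zeta k (I J : L -> Prop) : dist_le k I J -> dist_le k (zeta neg I) (zeta neg J).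
Proof.
elim: k J => [|k IH] J /=.
  by move=> [h1 h2]; split; apply: zeta_anti.
move=> [K [pK [d c]]]; exists (zeta neg K); split; first exact: zeta_prime.
split; first exact: IH.
by case: c => h; [right | left]; apply: zeta_anti.
Qed.

Lemma dist_zeta_inv k (I J : L -> Prop) : dist_le k (zeta neg I) (zeta neg J) -> dist_le k I J.
Proof.
move/dist_zeta => h; apply: (dist_start (dist_end h (eqI_zz J))); exact: eqI_zz.
Qed.

Definition Nk (p : L -> Prop) k q := prime_ideal q /\ dist_le k p q.
Definition Nz (p : L -> Prop) k q := prime_ideal q /\ dist_le k p (zeta neg q).

Lemma Nk_comp (p : L -> Prop) : prime_ideal p -> forall k, compC (Nk p k) /\ compF (Nk p k).
Proof.
move=> pp; elim=> [|k [IHC IHF]].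
  split.
  - move=> Z _ H; exists p; split; first by split => //; split.
    by move=> a /H [q [[_ [_ qp]] qa]]; apply: qp.
  - move=> Z _ H; exists p; split; first by split => //; split.
    by move=> a /H [q [[_ [pq _]] qa]] pa; apply: qa; apply: pq.
have allk : allprime (Nk p k) by move=> q [].
have e : forall q, Nup (Nk p k) q \/ Ndown (Nk p k) q <-> Nk p k.+1 q.
  move=> q; split.
  - case=> [[pq [K [[pK dK] h]]]|[pq [K [[pK dK] h]]]]; split => //; exists K; split => //; split => //.
    + by left.
    + by right.
  - move=> [pq [K [pK [dK [h|h]]]]]; [left|right]; split => //; exists K; split => //.
have apU : allprime (Nup (Nk p k)) by move=> q [].
have apD : allprime (Ndown (Nk p k)) by move=> q [].
split.
- apply: compC_ext e; apply: compC_union => //.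
  + exact: (compC_up hstar hneg allk).
  + exact: (compC_down allk).
- apply: compF_ext e; apply: compF_union => //.
  + exact: (compF_up allk).
  + exact: (compF_down hstar allk).
Qed.

Lemma Nz_comp (p : L -> Prop) k : compF (Nk p k) -> compC (Nz p k).
Proof.
move=> cF Z [Z0 [Zd Zj]] H.
pose Fl f := exists a, Z a /\ neg a <= f.
have iF : isFilter Fl.
  split; first by exists \bot; split => //; rewrite (neg0 hneg).
  split; first by move=> x y [a [Za h]] xy; exists a; split => //; apply: le_trans xy.
  move=> x y [a [Za h]] [b [Zb h']]; exists (a `|` b); split; first exact: Zj.
  by rewrite (negU hneg); apply: leI2.
have [|K [[pK dK] FK]] := cF Fl iF.
  move=> f [a [Za h]]; have [q [[pq dq] qa]] := H a Za.
  exists (zeta neg q); split; first by split => //; exact: zeta_prime.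
  move=> zf; apply: zf; apply: NNPP => nq; apply: nq.
  apply: (pi_le pq _ (neg_anti hneg h)); by rewrite (negK hneg).
exists (zeta neg K); split.
- split; first exact: zeta_prime.
  exact: (dist_end dK (eqI_sym (eqI_zz K))).
- move=> a Za Ka; apply: (FK (neg a)) => //; by exists a; split.
Qed.

Lemma N_comp (p : L -> Prop) k : prime_ideal p ->
  compC (fun q => Nk p k q \/ Nz p k q).
Proof.
move=> pp; have [cC cF] := Nk_comp pp k.
apply: compC_union => //; [by move=> q [] | by move=> q [] | exact: Nz_comp].
Qed.

End Dist.

Section Core.
Context {disp : Order.disp_t} {L : tbDistrLatticeType disp}.
Context (star neg : L -> L).
Context (hstar : is_pseudocomplement star) (hneg : is_deMorgan_involution neg).

Notation tt := (t star neg).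
Notation Z := (zeta neg).

Lemma lemB (p : L -> Prop) (a : L) n' : prime_ideal p -> minimal p ->
  (forall q, prime_ideal q -> dist_le n' p q \/ dist_le n' p (Z q) -> ~ q a) ->
  ~ p (tt n' a).
Proof.
move=> pp mp av.
have key : forall k m (s : L -> Prop), (m + k = n')%N -> prime_ideal s ->
    (forall r, prime_ideal r -> ideal_le r s -> dist_le m p r \/ dist_le m p (Z r)) ->
    ~ s (tt k a).
  elim=> [|k IH] m s e ps cl.
  - rewrite addn0 in e; subst m.
    rewrite /t /pstar_iter /=; apply: pi_meet_notin => //.
    + by apply: av => //; apply: cl => //.
    + apply: (star_notin hstar ps) => r pr rs; apply: NNPP => nr.
      apply: (av (Z r) (zeta_prime hneg pr)).
      * case: (cl r pr rs) => h; [right | left].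
        -- exact: (dist_end h (eqI_sym (eqI_zz hneg r))).
        -- exact: h.
      * exact: nr.
  - rewrite tS; apply: (star_notin hstar ps) => r pr rs; apply: NNPP => nr.
    apply: (IH m.+1 (Z r)) => //.
    + by rewrite addSnnS.
    + exact: zeta_prime.
    + move=> r' pr' r'r; case: (cl r pr rs) => h.
      * right; exists r; split => //; split => //; left.
        move=> b rb; apply: (zeta_anti r'r); exact: (proj2 (zetaK hneg r b) rb).
      * left; exists (Z r); split; first exact: zeta_prime.
        by split => //; right.
apply: (key n' 0 p) => //.
by move=> r pr rp; left; split => //; apply: mp.
Qed.

Definition beta a m (y : L -> Prop) := y (tt m a) \/ Z y (tt m a).

Lemma L1 (x y : L -> Prop) u : prime_ideal x -> x u -> ideal_le y x -> Z y (star (neg u)).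
Proof.
move=> px xu yx; apply: (star_in hstar (zeta_prime hneg px)).
- by rewrite /zeta (negK hneg).
- exact: zeta_anti.
Qed.

Lemma beta_step a m (x y : L -> Prop) : prime_ideal x -> prime_ideal y ->
  beta a m x -> comparable_ideals x y -> beta a m.+1 y.
Proof.
move=> px py [h|h] [c|c].
- left; apply: (pi_le py (c _ h)); exact: t_anti.
- right; rewrite tS; exact: (L1 px h c).
- left; apply/(zetaK hneg); rewrite tS.
  by apply: (L1 (zeta_prime hneg px) h); apply: zeta_anti.
- right; apply: (pi_le (zeta_prime hneg py) _ (t_anti hstar hneg m a)).
  exact: (zeta_anti c).
Qed.

Lemma beta_walk a (p : L -> Prop) : prime_ideal p -> forall k (y : L -> Prop), prime_ideal y ->
  dist_le k p y -> forall m, beta a m y -> beta a (m + k) p.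
Proof.
move=> pp; elim=> [|k IH] y py /=.
- move=> [h1 h2] m; rewrite addn0; case=> h; [left; exact: h2 | right => np; apply: h].
  exact: h1.
- move=> [K [pK [dK c]]] m b.
  have := beta_step py pK b (match c with or_introl h => or_intror h | or_intror h => or_introl h end).
  by move/(IH K pK dK); rewrite addSnnS.
Qed.

Lemma beta_base a (z y : L -> Prop) : prime_ideal z -> prime_ideal y -> z a ->
  comparable_ideals z y -> beta a 0 y.
Proof.
move=> pz py za [c|c].
- left; apply: (pi_le py (c _ za)); exact: leIl.
- right; apply: (pi_le (zeta_prime hneg py) (L1 pz za c)); exact: leIr.
Qed.

Lemma beta_zeta a m (y : L -> Prop) : beta a m (Z y) -> beta a m y.
Proof. by case=> h; [right | left; apply/(zetaK hneg)]. Qed.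

Lemma beta_final a n' (p : L -> Prop) : prime_ideal p -> beta a n' p -> p (tt n'.+1 a).
Proof.
move=> pp [h|h].
- apply: (pi_le pp h); exact: t_anti.
- apply/(zetaK hneg); rewrite tS; exact: (L1 (zeta_prime hneg pp) h (fun _ x => x)).
Qed.

Lemma core (p J0 : L -> Prop) n' : @no3chain _ L -> prime_ideal p -> minimal p -> prime_ideal J0 ->
  dist_le n'.+1 p J0 ->
  (forall m, (m < n'.+1)%N -> ~ dist_le m p J0 /\ ~ dist_le m p (Z J0)) ->
  exists a, ~ p (tt n' a) /\ p (tt n'.+1 a).
Proof.
move=> n3 pp mp pJ [K [pK [dK cK]]] far.
have farK : ~ dist_le n' p J0 by case: (far n' (ltnSn _)).
have [z [pz [maxz [farz nearz]]]] : exists z : L -> Prop, prime_ideal z /\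
    (forall q, prime_ideal q -> ideal_le z q -> ideal_le q z) /\
    (forall m, (m < n'.+1)%N -> ~ dist_le m p z /\ ~ dist_le m p (Z z)) /\
    (comparable_ideals K z \/ comparable_ideals (Z K) z).
  case: cK => c.
  - exists J0; split => //; split; last by split => //; left; left.
    move=> q pq Jq; apply: NNPP => nq.
    apply: (n3 K J0 q pK pJ pq c Jq) => // JK; apply: farK.
    by apply: (dist_end dK) => b; split; [apply: c | apply: JK].
  - exists (Z J0); split; first exact: zeta_prime.
    split.
    + move=> q pq Jq; apply: NNPP => nq.
      apply: (n3 (Z K) (Z J0) q (zeta_prime hneg pK) (zeta_prime hneg pJ) pq (zeta_anti c) Jq) => //.
      move=> JK; apply: farK; apply: (dist_end dK) => b; split.
      * move=> Kb; apply: (proj1 (zetaK hneg J0 b)); apply: (zeta_anti JK).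
        exact: (proj2 (zetaK hneg K b) Kb).
      * exact: c.
    + split; last by right; left; exact: zeta_anti.
      move=> m lm; have [f1 f2] := far m lm; split => // h; apply: f1.
      exact: (dist_end h (eqI_zz hneg J0)).
have [a [za av]] : exists a, z a /\ forall q, prime_ideal q ->
    dist_le n' p q \/ dist_le n' p (Z q) -> ~ q a.
  apply: NNPP => hne.
  have [q [Nq zq]] : exists q, (Nk p n' q \/ Nz neg p n' q) /\ forall a, z a -> q a.
    apply: (N_comp hstar hneg (k:=n') pp).
    - split; first exact: pi_bot pz.
      split; first by move=> x y zy xy; apply: pi_le pz zy xy.
      by move=> x y; apply: pi_join.
    - move=> a za; apply: NNPP => h; apply: hne; exists a; split => // q pq dq qa.
      apply: h; exists q; split => //.
      by case: dq => dq; [left | right]; split.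
  have pq : prime_ideal q by case: Nq => [] [].
  have qz := maxz q pq zq.
  have eqz : eqI q z by move=> b; split; [apply: qz | apply: zq].
  case: Nq => [] [_ dq].
  - by case: (farz n' (ltnSn _)) => f _; apply: f; exact: (dist_end dq eqz).
  - case: (farz n' (ltnSn _)) => _ f; apply: f; apply: (dist_end dq).
    by move=> b; rewrite /zeta; split => h1 h2; apply: h1; apply/eqz.
exists a; split.
- exact: (lemB pp mp av).
- apply: (beta_final pp).
  have b0 : beta a 0 K.
    case: nearz => c.
    + by apply: (beta_base pz pK za); case: c => h; [right | left].
    + apply: beta_zeta; apply: (beta_base pz (zeta_prime hneg pK) za).
      by case: c => h; [right | left].
  by have := beta_walk pp pK dK b0.
Qed.

End Core.

Theorem theorem3p7 (disp : Order.disp_t) (L : tbDistrLatticeType disp)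
    (star neg : L -> L)
    (hpm : is_pm_algebra star neg) (hreg : is_regular star neg)
    (n : nat) (hn : (1 <= n)%N)
    (hxy : exists I J : L -> Prop, prime_ideal I /\ prime_ideal J /\
                                   zeta_dist_eq neg n I J) :
  ~ (forall x : L,
       pstar_iter star neg n.-1 (x `&` star (neg x)) =
       pstar_iter star neg n (x `&` star (neg x))).
Proof.
case: hpm => hstar hneg.
have n3 := reg_no3chain hstar hneg hreg.
case: n hn hxy => // n' _ [I [J [pI [pJ [d far]]]]] E.
have [J0 [pJ0 [dJ0 farJ0]]] : exists J0 : L -> Prop, prime_ideal J0 /\ dist_le n'.+1 I J0 /\
    (forall m, (m < n'.+1)%N -> ~ dist_le m I J0 /\ ~ dist_le m I (zeta neg J0)).
  case: d => d.
  - by exists J; split => //; split.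
  - exists (zeta neg J); split; first exact: zeta_prime.
    split => // m lm; have [f1 f2] := far m lm; split => // h; apply: f1.
    exact: (dist_end h (eqI_zz hneg J)).
have fin : forall p J1 : L -> Prop, prime_ideal p -> minimal p -> prime_ideal J1 ->
    dist_le n'.+1 p J1 ->
    (forall m, (m < n'.+1)%N -> ~ dist_le m p J1 /\ ~ dist_le m p (zeta neg J1)) -> False.
  move=> p J1 pp mp pJ1 d1 f1.
  have [a [na ya]] := core hstar hneg n3 pp mp pJ1 d1 f1.
  apply: na; move: (E a); rewrite /t /= => ->; exact: ya.
case: (min_or_zeta hneg n3 pI) => mI.
- exact: (fin I J0 pI mI pJ0 dJ0 farJ0).
- apply: (fin (zeta neg I) (zeta neg J0) (zeta_prime hneg pI) mI (zeta_prime hneg pJ0)).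
  + exact: dist_zeta.
  + move=> m lm; have [f1 f2] := farJ0 m lm; split => h.
    * apply: f1; exact: (dist_zeta_inv hneg h).
    * apply: f2; exact: (dist_zeta_inv hneg h).
Qed.
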